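(* For every term $t\in T( *,\circ,x)$ there exists a positive integer $p$ such that $x^{[n]}\equiv_{\mathtt{ALD}} t*x^{[n-p]}$ holds for all sufficiently large $n$.
   Context: $T( *,\circ,x)$ is the set of terms built from a single variable $x$ using two binary operation symbols $*$ and $\circ$. Right vines: $x^{[1]}=x$ and $x^{[n]}=x*x^{[n-1]}$ for $n\ge2$. $\equiv_{\mathtt{ALD}}$ is the congruence on terms generated by the three laws $x*(y*z)=(x*y)*(x*z)$, $x*(y\circ z)=(x*y)\circ(x*z)$, $x*(y*z)=(x\circ y)*z$ (i.e. equality modulo these identities). *)

(* Defs.v *)
From Stdlib Require Import Arith.

Inductive term : Type :=
| X : term
| Star : term -> term -> term
| Circ : term -> term -> term.

(* Right vines: x^[1] = x, x^[n] = x * x^[n-1] for n >= 2.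
   (x^[0] is set to x as a harmless junk value; it never matters for
   sufficiently large n.) *)
Fixpoint vine (n : nat) : term :=
  match n with
  | 0 => X
  | 1 => X
  | S m => Star X (vine m)
  end.

Inductive ald_eq : term -> term -> Prop :=
| ald_refl t : ald_eq t t
| ald_sym t u : ald_eq t u -> ald_eq u t
| ald_trans t u v : ald_eq t u -> ald_eq u v -> ald_eq t v
| ald_star t t' u u' : ald_eq t t' -> ald_eq u u' -> ald_eq (Star t u) (Star t' u')
| ald_circ t t' u u' : ald_eq t t' -> ald_eq u u' -> ald_eq (Circ t u) (Circ t' u')
| ald_LD a b c : ald_eq (Star a (Star b c)) (Star (Star a b) (Star a c))
| ald_LDcirc a b c : ald_eq (Star a (Circ b c)) (Circ (Star a b) (Star a c))
| ald_assoc a b c : ald_eq (Star a (Star b c)) (Star (Circ a b) c).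

(* Main.v *)
Require Import Defs.
From Stdlib Require Import Arith Lia.

Lemma vine_S : forall n, 2 <= n -> vine n = Star X (vine (n - 1)).
Proof.
  intros [|[|m]] H; try lia. simpl. rewrite ?Nat.sub_0_r. reflexivity.
Qed.

Theorem lemma3p3 :
  forall t : term, exists p : nat, 0 < p /\
    exists N : nat, forall n : nat, N <= n ->
      ald_eq (vine n) (Star t (vine (n - p))).
Proof.
  induction t as [| t1 IH1 t2 IH2 | t1 IH1 t2 IH2].
  - exists 1. split; [lia|]. exists 2. intros n Hn. rewrite (vine_S n Hn). apply ald_refl.
  - destruct IH1 as [p1 [Hp1 [N1 H1]]]. destruct IH2 as [p2 [Hp2 [N2 H2]]].
    exists p2. split; [lia|]. exists (N1+N2+p1+p2). intros n Hn.
    eapply ald_trans. apply (H1 n); lia.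
    eapply ald_trans. apply ald_star. apply ald_refl. apply (H2 (n - p1)); lia.
    eapply ald_trans. apply ald_LD.
    apply ald_star. apply ald_refl.
    replace (n - p1 - p2) with (n - p2 - p1) by lia.
    apply ald_sym. apply H1. lia.
  - destruct IH1 as [p1 [Hp1 [N1 H1]]]. destruct IH2 as [p2 [Hp2 [N2 H2]]].
    exists (p1 + p2). split; [lia|]. exists (N1+N2+p1+p2). intros n Hn.
    eapply ald_trans. apply (H1 n); lia.
    eapply ald_trans. apply ald_star. apply ald_refl. apply (H2 (n - p1)); lia.
    replace (n - (p1 + p2)) with (n - p1 - p2) by lia.
    apply ald_assoc.
Qed.
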